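(* Let $r\in(0,1]$, $t>0$, $a\ge0$ and $x>0$. If $S(x;r,t,a)=0$, where \[ S(x;r,t,a)=4ax^3-\{8a^2+4a(3r+2)t-t^2\}x^2+2\big[2a^3-2a^2(5r-2)t+a\{r(6r-1)+1\}t^2-(r+1)t^3\big]x+(r-1)^2t^2\{a^2-a(4r-2)t+t^2\}, \] then $\rho(x;r,t,a)=0$.
   Context: The three-parametric MP density $\rho(x;r,t,a)$ ($r\in(0,1]$, $t>0$, $a\ge0$) is the density of the weak limit, as $N,M\to\infty$ with $N/M\to r$, of $\frac1N\sum_{j}\delta_{X^N_j(t)/M}$, where $X^N_j$ solve $dX^N_j=2\sqrt{X^N_j}dB_j+2(M-N+1)dt+4X^N_j\sum_{k\neq j}\frac{dt}{X^N_j-X^N_k}$ with independent standard Brownian motions $B_j$ and $X^N_j(0)=aM$; equivalently its Stieltjes transform $G$ solves $z=\frac1G+\frac{t}{1-rtG}+\frac{a}{(1-rtG)^2}$, and $\rho(x)=-\frac1\pi\lim_{\varepsilon\to0}\Im G(x+i\varepsilon)$. *)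

(* Defs.v *)
From HB Require Import structures.
From mathcomp Require Import all_boot all_order all_algebra.
From mathcomp Require Import all_classical all_reals all_analysis.
From mathcomp Require Import complex.
Set Implicit Arguments. Unset Strict Implicit. Unset Printing Implicit Defensive.
Import Order.TTheory GRing.Theory Num.Theory ComplexField.
Import numFieldNormedType.Exports.
Local Open Scope classical_set_scope.
Local Open Scope ring_scope.


(** Stieltjes transform G(z) = \int dmu(y) / (z - y) of a probability measure
    mu on R, written through its real and imaginary parts
    Re 1/(z-y) = (complex.Re z - y)/|z-y|^2,  Im 1/(z-y) = - complex.Im z/|z-y|^2. *)
Definition stieltjes (R : realType) (mu : probability R R) (z : R[i]) : R[i] :=
  Complex (Rintegral mu setT (fun y : R => (complex.Re z - y) / ((complex.Re z - y) ^+ 2 + complex.Im z ^+ 2)))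
          (Rintegral mu setT (fun y : R => - complex.Im z / ((complex.Re z - y) ^+ 2 + complex.Im z ^+ 2))).

Definition is_MP_law (R : realType) (r t a : R) (mu : probability R R) : Prop :=
  forall z : R[i], 0 < complex.Im z ->
    let G := stieltjes mu z in
    z = G^-1 + (t%:C)%C / (1 - ((r * t)%:C)%C * G) + (a%:C)%C / (1 - ((r * t)%:C)%C * G) ^+ 2.

(** rho(x) = - (1/pi) lim_{eps -> 0+} Im G(x + i eps) exists and equals v. *)
Definition MP_density_is (R : realType) (mu : probability R R) (x v : R) : Prop :=
  (fun eps : R => - pi^-1 * complex.Im (stieltjes mu (Complex x eps))) @ 0^'+ --> v.

Definition S_poly (R : realType) (x r t a : R) : R :=
  4 * a * x ^+ 3
  - (8 * a ^+ 2 + 4 * a * (3 * r + 2) * t - t ^+ 2) * x ^+ 2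
  + 2 * (2 * a ^+ 3 - 2 * a ^+ 2 * (5 * r - 2) * t
         + a * (r * (6 * r - 1) + 1) * t ^+ 2 - (r + 1) * t ^+ 3) * x
  + (r - 1) ^+ 2 * t ^+ 2 * (a ^+ 2 - a * (4 * r - 2) * t + t ^+ 2).

(* Main.v *)
Require Import Defs.
From HB Require Import structures.
From mathcomp Require Import all_boot all_order all_algebra.
From mathcomp Require Import all_classical all_reals all_analysis.
From mathcomp Require Import complex.
From mathcomp Require Import ring lra.
Import Order.TTheory GRing.Theory Num.Theory ComplexField.
Import numFieldNormedType.Exports.
Set Implicit Arguments. Unset Strict Implicit.
Local Open Scope ring_scope.

Lemma cubic_fact (R : realType) (c3 c2 c1 c0 : R) : c3 != 0 ->
  18*c3*c2*c1*c0-4*c2^+3*c0+c2^+2*c1^+2-4*c3*c1^+3-27*c3^+2*c0^+2 = 0 ->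
  exists al be : R, c1 = -3*c3*al^+2 - 2*c2*al /\ c0 = 2*c3*al^+3 + c2*al^+2
     /\ be = - c2/c3 - 2 * al.
Proof.
move=> c30 D0.
have [p0|p0] := eqVneq (c2^+2 - 3*c3*c1) 0.
- have hc1 : c1 = c2^+2/(3*c3).
    apply: (@mulIf _ (3*c3)); first by rewrite mulf_neq0 // pnatr_eq0.
    rewrite mulfVK ?mulf_neq0 ?pnatr_eq0 //. by apply/eqP; rewrite -subr_eq0 -oppr_eq0; apply/eqP; rewrite -p0; ring.
  have hc0 : c0 = c2^+3/(27*c3^+2).
    have : (27*c3^+2*c0 - c2^+3)^+2 = 0.
      rewrite -(mulr0 (-27*c3^+2)) -D0 hc1. field. by rewrite c30.
    move/eqP; rewrite expf_eq0 /= subr_eq0 => /eqP <-. field. by rewrite c30.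
  exists (-c2/(3*c3)), (-c2/(3*c3)); split; last split.
  + rewrite hc1. field. by rewrite c30.
  + rewrite hc0. field. by rewrite c30.
  + field. by rewrite c30.
- set X := 9*c3*c0 - c2*c1.
  set p := c2^+2 - 3*c3*c1 in p0.
  have hA : 3*c3*X^+2+4*c2*X* p+4*c1* p^+2 = 0.
    by rewrite -(mulr0 (-9*c3)) -D0 /X /p; ring.
  have hB : c3*X^+3+2*c2*X^+2* p+4*c1*X* p^+2+8*c0* p^+3 = 0.
    by rewrite -(mulr0 (9*c3*c2*c1 - 27*c3^+2*c0 - 2*c2^+3)) -D0 /X /p; ring.
  exists (X/(2* p)), (-c2/c3 - 2*(X/(2* p))); split; last split => //.
  + apply: (@mulIf _ (4* p^+2)); first by rewrite mulf_neq0 // ?pnatr_eq0 // expf_neq0.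
    rewrite -[LHS]subr0 -[in LHS]hA. field. by rewrite p0.
  + apply: (@mulIf _ (8* p^+3)); first by rewrite mulf_neq0 // ?pnatr_eq0 // expf_neq0.
    have h1 : c1 * (4* p^+2) = -3*c3*X^+2 - 4*c2*X* p.
      by rewrite -[LHS]subr0 -[in LHS]hA; ring.
    have h0 : c0 * (8* p^+3) = -(c3*X^+3+2*c2*X^+2* p) - X * (c1*(4* p^+2)).
      by rewrite -[LHS]subr0 -[in LHS]hB; ring.
    rewrite h0 h1. field. by rewrite p0.
Qed.

Lemma eqle (R : realType) (x y : R) : x = y -> x <= y. Proof. by move->. Qed.

Lemma bound (R : realType) (c3 s al be eps u v : R) :
 0 < c3 -> 0 < s -> 0 < eps -> 32 * s^+2 * eps < c3 ->
 c3^+2 * ((u-al)^+2+v^+2)^+2 * ((u-be)^+2+v^+2) = eps^+2 * (u^+2+v^+2) * ((1-s*u)^+2+(s*v)^+2)^+2 ->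
 v^+6 <= eps^+2 * ((4*al^+2+4*be^+2+s^-2) * (2+2*s^+2*(4*al^+2+4*be^+2+s^-2))^+2 / c3^+2).
Proof.
move=> c30 s0 e0 hse.
set A := (u-al)^+2+v^+2; set B := (u-be)^+2+v^+2; set n := u^+2+v^+2.
set L := (1-s*u)^+2+(s*v)^+2; set M := 4*al^+2+4*be^+2+s^-2 => E.
have vA : v^+2 <= A by rewrite /A lerDr sqr_ge0.
have vB : v^+2 <= B by rewrite /B lerDr sqr_ge0.
have A0 : 0 <= A by rewrite /A addr_ge0 ?sqr_ge0.
have B0 : 0 <= B by rewrite /B addr_ge0 ?sqr_ge0.
have n0 : 0 <= n by rewrite /n addr_ge0 ?sqr_ge0.
have L0 : 0 <= L by rewrite /L addr_ge0 ?sqr_ge0.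
have s2 : 0 < s^+2 by rewrite exprn_gt0.
have hL : L <= 2 + 2 * s^+2 * n by move: (sqr_ge0 (1+s*u)) (sqr_ge0 (s*v)); rewrite /L /n; nra.
have hn : n <= M.
  rewrite leNgt; apply/negP => nM.
  have s2i : s^+2 * s^-2 = 1 by rewrite divff // gt_eqF.
  have si0 : 0 <= s^-2 by rewrite invr_ge0 ltW.
  have n4a : 4*al^+2 <= n.
    move: (sqr_ge0 be) nM; rewrite /M. move=> h1 h2. lra.
  have n4b : 4*be^+2 <= n by move: (sqr_ge0 al) nM; rewrite /M; lra.
  have ns : 1 <= s^+2 * n.
    rewrite -s2i ler_pM2l //; apply: ltW; apply: le_lt_trans nM.
    by rewrite /M lerDr addr_ge0 // mulr_ge0 // sqr_ge0.
  have An : n/4 <= A by move: (sqr_ge0 (u-2*al)) (sqr_ge0 v) n4a; rewrite /A /n; nra.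
  have Bn : n/4 <= B by move: (sqr_ge0 (u-2*be)) (sqr_ge0 v) n4b; rewrite /B /n; nra.
  have L4 : L <= 4 * s^+2 * n by nra.
  have npos : 0 < n by nra.
  have lhs : c3^+2 * (n/4)^+2 * (n/4) <= c3^+2 * A^+2 * B.
    have h1 : (n/4)^+2 <= A^+2 by rewrite lerXn2r // ?nnegrE ?divr_ge0.
    have h2 : (n/4)^+2 * (n/4) <= A^+2 * B by apply: ler_pM; rewrite ?sqr_ge0 ?divr_ge0.
    by rewrite -[c3^+2 * (n/4)^+2 * (n/4)]mulrA -[c3^+2 * A^+2 * B]mulrA ler_pM2l ?exprn_gt0.
  have rhs : eps^+2 * n * L^+2 <= eps^+2 * n * (4 * s^+2 * n)^+2.
    by rewrite ler_pM2l ?mulr_gt0 ?exprn_gt0 // lerXn2r // nnegrE mulr_ge0 // ?mulr_ge0 // ltW.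
  have : c3^+2 * n^+3 <= (32 * s^+2 * eps)^+2 * n^+3.
    move: lhs; rewrite E => lhs; have h := le_trans lhs rhs.
    have e1 : c3^+2 * (n/4)^+2 * (n/4) = (c3^+2 * n^+3)/64 by field.
    have e2 : eps^+2 * n * (4 * s^+2 * n)^+2 = ((32*s^+2*eps)^+2 * n^+3)/64 by field.
    by move: h; rewrite e1 e2 ler_pM2r.
  move=> h; have h2 : c3^+2 <= (32 * s^+2 * eps)^+2 by rewrite -(ler_pM2r (exprn_gt0 3 npos)).
  have p0 : 0 <= 32 * s^+2 * eps by rewrite !mulr_ge0 // ltW.
  move: h2 p0 hse c30; set q := 32 * s^+2 * eps; nra.
have M0 : 0 <= M by apply: le_trans n0 hn.
have hLM : L <= 2 + 2 * s^+2 * M.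
  by apply: le_trans hL _; rewrite lerD2l ler_pM2l ?mulr_gt0.
have hL2 : L^+2 <= (2 + 2 * s^+2 * M)^+2 by rewrite lerXn2r ?nnegrE // (le_trans L0 hLM).
have hnL2 : n * L^+2 <= M * (2 + 2 * s^+2 * M)^+2 by apply: ler_pM; rewrite ?sqr_ge0.
have hnL : eps^+2 * n * L^+2 <= eps^+2 * M * (2 + 2 * s^+2 * M)^+2.
  by rewrite -[eps^+2 * n * L^+2]mulrA -[eps^+2 * M * _]mulrA ler_pM2l ?exprn_gt0.
have v6 : v^+6 <= A^+2 * B.
  rewrite (_ : v^+6 = (v^+2)^+2 * v^+2); last by ring.
  have h1 : (v^+2)^+2 <= A^+2 by rewrite lerXn2r ?nnegrE ?sqr_ge0.
  by apply: ler_pM; rewrite ?sqr_ge0.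
apply: le_trans v6 _.
rewrite mulrA ler_pdivlMr ?exprn_gt0 //.
rewrite (_ : A^+2 * B * c3^+2 = c3^+2 * A^+2 * B); last by ring.
rewrite E; apply: le_trans hnL _; apply: eqle; ring.
Qed.


Section Cx.
Local Open Scope complex_scope.
Definition N (R : realType) (w : R[i]) : R := complex.Re w ^+ 2 + complex.Im w ^+ 2.

Lemma NM (R : realType) (a b : R[i]) : N (a * b) = N a * N b.
Proof. case: a => a1 a2; case: b => b1 b2; rewrite /N /=. ring. Qed.

Lemma NX (R : realType) (a : R[i]) n : N (a ^+ n) = N a ^+ n.
Proof. elim: n => [|n IH]; first by rewrite /N /= expr0n /= ?expr1n; ring. by rewrite !exprS NM IH. Qed.

Lemma Nsub (R : realType) (u v al : R) : N (Complex u v - al%:C) = (u - al)^+2 + v^+2.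
Proof. rewrite /N /=. ring. Qed.

Lemma N1s (R : realType) (u v s : R) : N (1 - s%:C * Complex u v) = (1 - s*u)^+2 + (s*v)^+2.
Proof. rewrite /N /=. ring. Qed.

Lemma fact3 (R : realType) (c3 c2 c1 c0 al be : R) (w : R[i]) : c3 != 0 ->
  c1 = -3*c3*al^+2 - 2*c2*al -> c0 = 2*c3*al^+3 + c2*al^+2 -> be = - c2/c3 - 2 * al ->
  c3%:C*w^+3 + c2%:C*w^+2 + c1%:C*w + c0%:C = c3%:C*(w-al%:C)^+2*(w-be%:C).
Proof.
move=> c30 -> -> hbe.
have -> : c2 = - c3 * (be + 2 * al) by rewrite hbe; field.
rewrite ?rmorphD ?rmorphB ?rmorphN ?rmorphM ?rmorphXn /=.
ring.
Qed.

Lemma NM3 (R : realType) (a b c : R[i]) : N (a * b^+2 * c) = N a * N b ^+ 2 * N c.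
Proof. case: a => a1 a2; case: b => b1 b2; case: c => c1 c2; rewrite /N /=. ring. Qed.

Lemma NM3' (R : realType) (a b c : R[i]) : N (a * b * c^+2) = N a * N b * N c ^+ 2.
Proof. case: a => a1 a2; case: b => b1 b2; case: c => c1 c2; rewrite /N /=. ring. Qed.

Lemma NC (R : realType) (c : R) : N c%:C = c ^+ 2.
Proof. rewrite /N /=. ring. Qed.

Lemma NNi (R : realType) (e : R) : N (- Complex 0 e) = e ^+ 2.
Proof. rewrite /N /=. ring. Qed.
End Cx.

Theorem lemma2p4 (R : realType) (r t a x : R) (mu : probability R R) :
  0 < r -> r <= 1 -> 0 < t -> 0 <= a -> 0 < x ->
  S_poly x r t a = 0 ->
  is_MP_law r t a mu ->
  MP_density_is mu x 0.
Proof.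
move=> r0 r1 t0 a0 x0 hS hMP.
have s0 : 0 < r * t by rewrite mulr_gt0.
pose c3 := x * (r*t)^+2. pose c2 := -2*x*(r*t) - (r*t)^+2 + t*(r*t).
pose c1 := x + 2*(r*t) - t - a. pose c0 : R := -1.
have c30 : 0 < c3 by rewrite mulr_gt0 ?exprn_gt0.
have c3n : c3 != 0 by rewrite lt0r_neq0.
have D0 : 18*c3*c2*c1*c0-4*c2^+3*c0+c2^+2*c1^+2-4*c3*c1^+3-27*c3^+2*c0^+2 = 0.
  have -> : 18*c3*c2*c1*c0-4*c2^+3*c0+c2^+2*c1^+2-4*c3*c1^+3-27*c3^+2*c0^+2
     = (r*t)^+2 * S_poly x r t a by rewrite /S_poly /c3 /c2 /c1 /c0; ring.
  by rewrite hS mulr0.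
have [al [be [h1 [h0 hbe]]]] := cubic_fact c3n D0.
have key : forall eps, 0 < eps ->
  c3^+2 * ((complex.Re (stieltjes mu (Complex x eps)) - al)^+2 + complex.Im (stieltjes mu (Complex x eps))^+2)^+2
   * ((complex.Re (stieltjes mu (Complex x eps)) - be)^+2 + complex.Im (stieltjes mu (Complex x eps))^+2)
  = eps^+2 * (complex.Re (stieltjes mu (Complex x eps))^+2 + complex.Im (stieltjes mu (Complex x eps))^+2)
   * ((1 - (r*t) * complex.Re (stieltjes mu (Complex x eps)))^+2 + ((r*t) * complex.Im (stieltjes mu (Complex x eps)))^+2)^+2.
  move=> eps e0.
  have hz : Complex x eps = (stieltjes mu (Complex x eps))^-1
     + (t%:C)%C / (1 - ((r * t)%:C)%C * stieltjes mu (Complex x eps))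
     + (a%:C)%C / (1 - ((r * t)%:C)%C * stieltjes mu (Complex x eps)) ^+ 2 := hMP (Complex x eps) e0.
  move: hz; set G := stieltjes mu (Complex x eps); clearbody G => hz.
  have G0 : G != 0.
    apply/negP => /eqP G0; move: hz; rewrite G0 invr0 mulr0 subr0 expr1n !divr1 add0r.
    move=> /(congr1 (@complex.Im R)) /= h; by move: e0; rewrite h addr0 ltxx.
  have H0 : 1 - ((r * t)%:C)%C * G != 0.
    apply/negP => /eqP H0; move: hz; rewrite H0 expr0n /= invr0 !mulr0 !addr0.
    move/eqP: H0; rewrite subr_eq0 => /eqP H1.
    have -> : G^-1 = ((r*t)%:C)%C by apply: (mulIf G0); rewrite mulVf // -H1.
    move=> /(congr1 (@complex.Im R)) /= h; by move: e0; rewrite h ltxx.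
  have E1 : Complex x eps * G * (1 - ((r * t)%:C)%C * G)^+2
     = (1 - ((r * t)%:C)%C * G)^+2 + (t%:C)%C * G * (1 - ((r * t)%:C)%C * G) + (a%:C)%C * G.
    rewrite {1}hz. field. by rewrite -rmorphM H0 G0.
  have zE : Complex x eps = (x%:C)%C + Complex 0 eps.
    by apply/eqP; rewrite eq_complex /= addr0 add0r !eqxx.
  have Qx : (c3%:C)%C*G^+3 + (c2%:C)%C*G^+2 + (c1%:C)%C*G + (c0%:C)%C
      = -(Complex 0 eps) * G * (1 - ((r * t)%:C)%C * G)^+2.
    transitivity ((x%:C)%C * G * (1 - ((r * t)%:C)%C * G)^+2
                  - Complex x eps * G * (1 - ((r * t)%:C)%C * G)^+2).
      rewrite E1 /c3 /c2 /c1 /c0 ?rmorphD ?rmorphB ?rmorphN ?rmorphM ?rmorphXn ?rmorph1 /=.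
      ring.
    rewrite zE; ring.
  rewrite (fact3 G c3n h1 h0 hbe) in Qx.
  move/(congr1 (@N R)): Qx; rewrite NM3 NM3' NC NNi.
  case: G {hz G0 H0 E1} => u v /=.
  by rewrite !Nsub N1s {1}/N /=.
pose M := 4*al^+2+4*be^+2+(r*t)^-2.
pose Cc := M * (2+2*(r*t)^+2*M)^+2 / c3^+2.
have M0 : 0 <= M.
  have : 0 <= (r*t)^-2 by rewrite invr_ge0 exprn_ge0 // ltW.
  by move: (sqr_ge0 al) (sqr_ge0 be); rewrite /M; lra.
have C0 : 0 <= Cc by rewrite /Cc divr_ge0 ?sqr_ge0 // mulr_ge0 ?sqr_ge0.
apply/cvgrPdist_lt => e e0.
have pi0 : 0 < (pi : R) by exact: pi_gt0.
have ep0 : 0 < e * pi by rewrite mulr_gt0.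
near=> eps.
have eps0 : 0 < eps by near: eps; exact: nbhs_right_gt.
have eps1 : eps < 1 by near: eps; exact: nbhs_right_lt ltr01.
have eps2 : eps < c3 / (32 * (r*t)^+2).
  by near: eps; apply: nbhs_right_lt; rewrite divr_gt0 // mulr_gt0 // exprn_gt0.
have eps3 : eps < (e * pi)^+6 / (Cc+1).
  near: eps; apply: nbhs_right_lt; rewrite divr_gt0 ?exprn_gt0 //.
  by rewrite ltr_wpDl.
have hse : 32 * (r*t)^+2 * eps < c3.
  by move: eps2; rewrite ltr_pdivlMr ?mulr_gt0 ?exprn_gt0 // mulrC.
have hb := bound c30 s0 eps0 hse (key eps eps0).
move: hb; set v := complex.Im (stieltjes mu (Complex x eps)) => hb.
have {}hb : v^+6 <= eps^+2 * Cc := hb.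
have C1 : 0 < Cc + 1 by lra.
have v6 : v^+6 < (e * pi)^+6.
  apply: le_lt_trans hb _.
  have h2 : eps^+2 * Cc <= eps * (Cc+1).
    rewrite expr2 -mulrA ler_pM2l //; nra.
  apply: le_lt_trans h2 _.
  by rewrite -ltr_pdivlMr.
have hv : `|v| < e * pi.
  rewrite ltNge; apply/negP => hv.
  have : (e*pi)^+6 <= `|v|^+6 by rewrite lerXn2r ?nnegrE // ltW.
  rewrite (_ : `|v|^+6 = v^+6); last first.
    by rewrite (_ : 6 = 2*3)%N // !exprM real_normK ?num_real.
  by move=> h; move: (lt_le_trans v6 h); rewrite ltxx.
rewrite /= sub0r mulNr opprK normrM ger0_norm ?invr_ge0 ?ltW // mulrC ltr_pdivrMr //.
Unshelve. all: by end_near.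
Qed.
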